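(* Let $\sigma$ be a reasonable strategy of player $0$ in the escape arena $\mathcal{A}_\bot$ and $I_\sigma$ its set of improvements. Then every direct improvement $\sigma'$ of $\sigma$ satisfies $\sigma'\preceq I_\sigma$, i.e. $\mathcal{V}_{\sigma'}(s)\preceq\mathcal{V}_{I_\sigma}(s)$ for all vertices $s$.
   Context: Parity game arena: $\mathcal{A}=(V,E,o,c)$ with $V$ finite, $E\subseteq V\times V$, every vertex has a successor, owner map $o:V\to\{0,1\}$, colouring $c:V\to\{0,\dots,d-1\}$; $V_i=o^{-1}(i)$. An infinite vertex sequence is won by player $0$ (parity condition) iff the largest colour occurring infinitely often is even. A cycle $s_0\dots s_n$ ($s_{j+1}\in s_jE$, $s_0\in s_nE$) is $i$-dominated if its largest colour has parity $i$. Escape arena $\mathcal{A}_\bot$: vertices $V\cup\{\bot\}$, edges $E_\bot=E\cup(V_0\times\{\bot\})$, $\bot$ owned by player $0$ with no outgoing edges. Let $E_0=E_\bot\cap (V_0\times(V\cup\{\bot\}))$, $E_1=E\cap(V_1\times V)$. A strategy of player $i$ is a set $\sigma\subseteq E_i$ with $s\sigma\neq\emptyset$ for all $s\in V_i$. $\mathcal{A}_\bot|_{\sigma,\tau}$ is the graph with edge set $\sigma\cup\tau$, $\mathcal{A}_\bot|_\sigma$ the graph with edge set $\sigma\cup E_1$; a play is a maximal path (infinite or ending in $\bot$). Colour profiles: $\mathcal{P}=\mathbb{Z}^d\cup\{-\infty,\infty\}$, $\text{\o}$ the zero vector. $\wp(s)$ ($s\in V$) is the unit vector at coordinate $c(s)$;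 for a finite path $\wp$ is the sum over its vertices in $V$; for an infinite play $\wp=\infty$ if won by player $0$ under the parity condition, else $-\infty$. Addition componentwise, $x+\infty=\infty$, $x+(-\infty)=-\infty$. Total order $\prec$: $-\infty$ least, $\infty$ greatest; for distinct $p,p'\in\mathbb{Z}^d$ with $k$ the largest index where they differ, $p\prec p'$ iff ($k$ even and $p_k<p'_k$) or ($k$ odd and $p_k>p'_k$). Valuation of a player-$0$ strategy $\sigma$: $\mathcal{V}_\sigma(\bot)=\text{\o}$, and for $s\in V$, $\mathcal{V}_\sigma(s)=\min^{\prec}_{\tau}\max^{\prec}\{\wp(\pi)\mid\pi\text{ a play in }\mathcal{A}_\bot|_{\sigma,\tau}\text{ from }s\}$, min over player-$1$ strategies. $\sigma$ is reasonable if $\mathcal{A}_\bot|_\sigma$ has no $1$-dominated cycle. For strategies, $\sigma_a\preceq\sigma_b$ iff $\mathcal{V}_{\sigma_a}(s)\preceq\mathcal{V}_{\sigma_b}(s)$ for all $s$. For reasonable $\sigma$, $(s,t)\in E_0$ is an improvement if $\mathcal{V}_\sigma(s)\preceq\wp(s)+\mathcal{V}_\sigma(t)$; $I_\sigma$ is the set of all improvements. A direct improvement of $\sigma$ is a player-$0$ strategy $\sigma'\subseteq I_\sigma$. *)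

(* Defs.v *)
From mathcomp Require Import all_boot all_order all_algebra.
From Stdlib Require Import ClassicalEpsilon.
Set Implicit Arguments. Unset Strict Implicit. Unset Printing Implicit Defensive.
Import Order.TTheory GRing.Theory Num.Theory.

(* Conventions:
   - vertices: a finType V; the escape arena has vertex type [option V],
     with [None] playing the role of the escape vertex ⊥.
   - owner o : V -> bool, with o v = false meaning v ∈ V_0 (player 0) and
     o v = true meaning v ∈ V_1 (player 1).
   - colouring c : V -> 'I_d.
   - E : rel V is the edge relation of the arena. *)

Definition asb (P : Prop) : bool :=
  if excluded_middle_informative P then true else false.

Section Parity.
Variables (V : finType) (d : nat) (E : rel V) (o : V -> bool) (c : V -> 'I_d).

Definition Ebot (x y : option V) : bool :=
  match x, y with
  | Some u, Some v => E u v
  | Some u, None => ~~ o u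
  | None, _ => false
  end.

Definition E0 (s : V) (t : option V) : bool := ~~ o s && Ebot (Some s) t.
Definition E1 (s t : V) : bool := o s && E s t.

Definition strategy0 (sigma : V -> option V -> bool) : Prop :=
  (forall s t, sigma s t -> E0 s t) /\
  (forall s, ~~ o s -> exists t, sigma s t).

Definition strategy1 (tau : V -> V -> bool) : Prop :=
  (forall s t, tau s t -> E1 s t) /\
  (forall s, o s -> exists t, tau s t).

Definition graph_st (sigma : V -> option V -> bool) (tau : V -> V -> bool)
  (x y : option V) : bool :=
  match x with
  | Some u => sigma u y || (match y with Some v => tau u v | None => false end)
  | None => false
  end.

Definition graph_s (sigma : V -> option V -> bool) (x y : option V) : bool :=
  match x with
  | Some u => sigma u y || (match y with Some v => E1 u v | None => false end)
  | None => false
  end.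

Inductive profile : Type :=
  | PNegInf : profile
  | PFin : {ffun 'I_d -> int} -> profile
  | PInf : profile.

Definition pzero : profile := PFin [ffun => 0%R].

Definition unitc (x : option V) : {ffun 'I_d -> int} :=
  [ffun i => match x with Some v => Posz (c v == i : nat) | None => 0%R end].

Definition pvtx (s : V) : profile := PFin (unitc (Some s)).

Definition ppath (l : seq (option V)) : profile :=
  PFin [ffun i => (\sum_(x <- l) unitc x i)%R].

Definition padd (x y : profile) : profile :=
  match y with
  | PInf => PInf
  | PNegInf => PNegInf
  | PFin b => match x with
              | PFin a => PFin [ffun i => (a i + b i)%R]
              | _ => x
              end
  end.

Definition plt_fin (a b : {ffun 'I_d -> int}) : Prop :=
  exists k : 'I_d,
    (forall j : 'I_d, (k < j)%N -> a j = b j) /\ a k <> b k /\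
    (if odd k then (b k < a k)%R else (a k < b k)%R).

Definition plt (x y : profile) : Prop :=
  match x, y with
  | PNegInf, PNegInf => False
  | PNegInf, _ => True
  | PFin _, PNegInf => False
  | PFin a, PFin b => plt_fin a b
  | PFin _, PInf => True
  | PInf, _ => False
  end.

Definition ple (x y : profile) : Prop := x = y \/ plt x y.

Definition inf_often (p : nat -> option V) (k : nat) : Prop :=
  forall N, exists n, (N <= n)%N /\ exists v, p n = Some v /\ nat_of_ord (c v) = k.

Definition won_by_0 (p : nat -> option V) : Prop :=
  exists k, inf_often p k /\ ~~ odd k /\ forall k', inf_often p k' -> (k' <= k)%N.

Definition play_profile (G : option V -> option V -> bool) (x : option V)
  (pr : profile) : Prop :=
  (exists p : nat -> option V, p 0%N = x /\ (forall n, G (p n) (p n.+1)) /\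
      pr = (if asb (won_by_0 p) then PInf else PNegInf))
  \/
  (exists l : seq (option V), path G x l /\ (forall y, ~~ G (last x l) y) /\
      pr = ppath (x :: l)).

Definition is_max (S : profile -> Prop) (p : profile) : Prop :=
  S p /\ forall q, S q -> ple q p.
Definition is_min (S : profile -> Prop) (p : profile) : Prop :=
  S p /\ forall q, S q -> ple p q.

Definition maxval (sigma : V -> option V -> bool) (tau : V -> V -> bool)
  (s : V) : profile :=
  epsilon (inhabits PNegInf) (is_max (play_profile (graph_st sigma tau) (Some s))).

Definition valuation (sigma : V -> option V -> bool) (x : option V) : profile :=
  match x with
  | None => pzero
  | Some s => epsilon (inhabits PNegInf)
      (is_min (fun q => exists tau, strategy1 tau /\ q = maxval sigma tau s))
  end.

Definition reasonable (sigma : V -> option V -> bool) : Prop :=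
  forall (cyc : seq V), cyc != [::] ->
    cycle (fun u v => graph_s sigma (Some u) (Some v)) cyc ->
    ~~ odd (\max_(v <- cyc) nat_of_ord (c v)).

Definition improvements (sigma : V -> option V -> bool) (s : V) (t : option V) : bool :=
  E0 s t && asb (ple (valuation sigma (Some s)) (padd (pvtx s) (valuation sigma t))).

Definition strat_le (sa sb : V -> option V -> bool) : Prop :=
  forall s : V, ple (valuation sa (Some s)) (valuation sb (Some s)).

End Parity.

(* Main.v *)
Require Import Defs.
From mathcomp Require Import all_boot all_order all_algebra.
From Stdlib Require Import Classical ClassicalEpsilon FunctionalExtensionality.
Set Implicit Arguments. Unset Strict Implicit. Unset Printing Implicit Defensive.
Import Order.TTheory GRing.Theory Num.Theory.

Section Ord.
Variable d : nat.
Implicit Types a b e : {ffun 'I_d -> int}.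

Lemma plt_fin_irr a : ~ plt_fin a a.
Proof. by case=> k [_ [H _]]. Qed.

Lemma plt_fin_trans a b e : plt_fin a b -> plt_fin b e -> plt_fin a e.
Proof.
case=> k1 [H1 [N1 D1]] [k2 [H2 [N2 D2]]].
case: (ltngtP k1 k2) => Hk.
- exists k2; split; first by move=> j Hj; rewrite H1 ?(ltn_trans Hk) // H2.
  by rewrite H1.
- exists k1; split; first by move=> j Hj; rewrite H1 // H2 // (ltn_trans Hk).
  by rewrite -(H2 _ Hk).
- have E : k1 = k2 by apply: val_inj.
  subst k2. exists k1; split; first by move=> j Hj; rewrite H1 // H2.
  case: (odd k1) D1 D2 => D1 D2.
  + split; last exact: (lt_trans D2 D1).
    by move=> Ha; rewrite Ha in D1; move: (lt_trans D1 D2); rewrite ltxx.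
  + split; last exact: (lt_trans D1 D2).
    by move=> Ha; rewrite Ha in D1; move: (lt_trans D1 D2); rewrite ltxx.
Qed.

Lemma plt_fin_total a b : a = b \/ plt_fin a b \/ plt_fin b a.
Proof.
case: (classic (a = b)) => [->|Hne]; [by left|right].
have [j0 Hj0] : exists j, a j != b j.
  apply: NNPP => Hn; apply: Hne; apply/ffunP => j.
  by apply/eqP; apply: contraT => H; case: Hn; exists j.
case: (@arg_maxnP _ j0 (fun i => a i != b i) (fun i : 'I_d => val i) Hj0) => k Hk Hmax.
have Heq : forall j : 'I_d, (k < j)%N -> a j = b j.
  move=> j Hj; apply/eqP; apply: contraT => H.
  by have := Hmax _ H; rewrite /= leqNgt Hj.
case: (ltgtP (a k) (b k)) => Hab; last by rewrite Hab eqxx in Hk.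
- case Ho: (odd k).
  + right; exists k; rewrite Ho; split; first by move=> j Hj; rewrite Heq.
    by split => // H; rewrite H eqxx in Hk.
  + left; exists k; rewrite Ho; split; first by move=> j Hj; rewrite Heq.
    by split => //; apply/eqP.
- case Ho: (odd k).
  + left; exists k; rewrite Ho; split; first by move=> j Hj; rewrite Heq.
    by split => //; apply/eqP.
  + right; exists k; rewrite Ho; split; first by move=> j Hj; rewrite Heq.
    by split => // H; rewrite H eqxx in Hk.
Qed.

Lemma plt_trans (x y z : profile d) : plt x y -> plt y z -> plt x z.
Proof.
case: x => [|a|]; case: y => [|b|]; case: z => [|e|] //=.
exact: plt_fin_trans.
Qed.

Lemma ple_refl (x : profile d) : ple x x.
Proof. by left. Qed.

Lemma ple_trans (x y z : profile d) : ple x y -> ple y z -> ple x z.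
Proof.
case=> [->|H1] // [<-|H2]; [by right| right; exact: plt_trans H1 H2].
Qed.

Lemma ple_total (x y : profile d) : ple x y \/ ple y x.
Proof.
unfold ple; case: x => [|a|]; case: y => [|b|]; simpl; try tauto.
case: (plt_fin_total a b) => [->|[]]; tauto.
Qed.

Lemma list_max (L : seq (profile d)) : L <> [::] ->
  exists2 m, List.In m L & forall q, List.In q L -> ple q m.
Proof.
elim: L => // x L IH _.
case: L IH => [|y L] IH.
  by exists x; [left|move=> q [->|[]]; left].
case: (IH ltac:(discriminate)) => m Hm Hmax.
case: (ple_total x m) => H.
  by exists m; [right|move=> q [<-|/Hmax]].
exists x; first by left.
move=> q [<-|/Hmax Hq]; first by left.
exact: ple_trans Hq H.
Qed.

Lemma list_min (L : seq (profile d)) : L <> [::] ->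
  exists2 m, List.In m L & forall q, List.In q L -> ple m q.
Proof.
elim: L => // x L IH _.
case: L IH => [|y L] IH.
  by exists x; [left|move=> q [->|[]]; left].
case: (IH ltac:(discriminate)) => m Hm Hmin.
case: (ple_total x m) => H.
  exists x; first by left.
  move=> q [<-|/Hmin Hq]; first by left.
  exact: ple_trans H Hq.
by exists m; [right|move=> q [<-|/Hmin]].
Qed.
End Ord.

Lemma asbT (P : Prop) : P -> asb P = true.
Proof. by rewrite /asb; case: excluded_middle_informative. Qed.
Lemma asbF (P : Prop) : ~ P -> asb P = false.
Proof. by rewrite /asb; case: excluded_middle_informative. Qed.

Lemma nonuniq_split (T : eqType) (s : seq T) : ~~ uniq s ->
  exists s1 y s2 s3, s = s1 ++ (y :: s2) ++ (y :: s3).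
Proof.
elim: s => //= a s IH; rewrite negb_and negbK => /orP [Ha|Hs].
  case/splitPr: Ha => p1 p2. by exists [::], a, p1, p2.
case: (IH Hs) => s1 [y [s2 [s3 ->]]]. by exists (a :: s1), y, s2, s3.
Qed.

Section Gen.
Variables (V : finType) (d : nat) (c : V -> 'I_d).
Variable G : option V -> option V -> bool.
Hypothesis hN : forall y, G None y = false.

Definition vsum (l : seq (option V)) : {ffun 'I_d -> int} :=
  [ffun i => (\sum_(x <- l) unitc c x i)%R].

Lemma vsum_cut a b e i : vsum (a ++ b ++ e) i = (vsum (a ++ e) i + vsum b i)%R.
Proof. rewrite !ffunE !big_cat /=. rewrite addrCA addrC. done. Qed.

Lemma unitc_ge0 x i : (0 <= unitc c x i)%R.
Proof. by rewrite ffunE; case: x. Qed.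

Definition colo (x : option V) : nat := if x is Some v then nat_of_ord (c v) else 0.

Lemma max_elem (l : seq (option V)) : l != [::] ->
  exists2 z, z \in l & forall z', z' \in l -> (colo z' <= colo z)%N.
Proof.
elim: l => // a l IH _.
case: (altP (l =P [::])) => [->|Hl].
  by exists a; rewrite ?mem_head // => z'; rewrite inE => /eqP ->.
case: (IH Hl) => z Hz Hm.
case: (leqP (colo a) (colo z)) => H.
  exists z; first by rewrite inE Hz orbT.
  by move=> z'; rewrite inE => /orP [/eqP ->|/Hm].
exists a; first exact: mem_head.
move=> z'; rewrite inE => /orP [/eqP ->|/Hm Hz'] //.
exact: leq_trans Hz' (ltnW H).
Qed.

Lemma all_some y q z : path G y (rcons q z) ->
  forall w, w \in y :: q -> exists v, w = Some v.
Proof.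
elim: q y => [|a q IH] y /=.
  rewrite andbT => Hy w; rewrite inE => /eqP ->.
  by case: y Hy => [v|]; [exists v| rewrite hN].
case/andP => Hy Hp w; rewrite inE => /orP [/eqP ->|Hw].
  by case: y Hy => [v|]; [exists v| rewrite hN].
exact: IH Hp w Hw.
Qed.

Definition NoWin x := ~ exists p : nat -> option V, p 0 = x /\
  (forall n, G (p n) (p n.+1)) /\ won_by_0 c p.

Lemma lasso_won x pre y q : path G x pre -> last x pre = y ->
  path G y (rcons q y) ->
  forall z, z \in y :: q -> (forall z', z' \in y :: q -> (colo z' <= colo z)%N) ->
  ~~ odd (colo z) -> ~ NoWin x.
Proof.
move=> Hpre Hlast Hcyc z Hz Hmax Hev Hnw; apply: Hnw.
set cl := y :: q. set k := size cl.
have k0 : (0 < k)%N by [].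
pose cyc n := nth y cl (n %% k).
have Ecyc : forall n, G (cyc n) (cyc n.+1).
  move=> n; rewrite /cyc.
  have Hm : (n %% k < k)%N by rewrite ltn_mod.
  have -> : (n.+1 %% k = (n %% k).+1 %% k)%N by rewrite -addn1 -modnDml addn1.
  move/(pathP y): Hcyc => /(_ (n %% k)); rewrite size_rcons => /(_ Hm).
  set m := n %% k in Hm *.
  rewrite -rcons_cons nth_rcons /= ltnS.
  case: (ltngtP m.+1 k) => H.
  - rewrite (modn_small H).
    have Hq : (m < size q)%N by rewrite /k /= ltnS in H.
    by rewrite (ltnW Hq) nth_rcons Hq.
  - by have := leq_trans H Hm; rewrite ltnn.
  - rewrite H modnn.
    have Hq : m = size q by rewrite /k /= in H; case: H.
    by rewrite Hq leqnn nth_rcons ltnn eqxx.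
pose p n := if (n < size pre)%N then nth x (x :: pre) n else cyc (n - size pre).
exists p; split.
  rewrite /p; case Hs: (0 < size pre)%N => //. move: Hs; rewrite lt0n => /negbFE/eqP/size0nil Hp. rewrite Hp /= in Hlast. by rewrite sub0n /cyc mod0n.
split.
  move=> n; rewrite /p.
  case: (ltngtP n.+1 (size pre)) => H.
  - by move/(pathP x): Hpre => /(_ n (ltn_trans (ltnSn n) H)).
  - rewrite subSn; [exact: Ecyc | by rewrite -ltnS].
  - rewrite -H subnn /cyc mod0n /=.
    have Hn : (n < size pre)%N by rewrite -H.
    move/(pathP x): Hpre => /(_ n Hn).
    have -> : nth x pre n = y by rewrite -Hlast -nth_last -H.
    done.
have [v Hv] := all_some Hcyc Hz.
exists (colo z); split; last split => //.
  move=> N; exists (size pre + (N * k + index z cl))%N; split.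
    apply: leq_trans (leq_addl _ _); apply: leq_trans (leq_addr _ _).
    by rewrite leq_pmulr.
  exists v; rewrite /p ltnNge leq_addr /= addKn /cyc modnMDl modn_small.
    by rewrite nth_index // Hv.
  by have := Hz; rewrite -index_mem.
move=> k' /(_ (size pre)) [n [Hn [v' [Hpn Hc]]]].
move: Hpn; rewrite /p ltnNge Hn /= /cyc => Hpn.
have : nth y cl ((n - size pre) %% k) \in cl by rewrite mem_nth // ltn_mod.
by rewrite Hpn => /Hmax; rewrite /= Hc.
Qed.

Lemma cycle_lt x pre y q (u : {ffun 'I_d -> int}) : NoWin x -> path G x pre -> last x pre = y ->
  path G y (rcons q y) -> plt_fin [ffun i => (u i + vsum (y :: q) i)%R] u.
Proof.
move=> Hnw Hpre Hlast Hcyc.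
have [z Hz Hm] := max_elem (isT : y :: q != [::]).
have [v Hv] := all_some Hcyc Hz.
case Ho: (odd (colo z)); last first.
  by exfalso; apply: (lasso_won Hpre Hlast Hcyc Hz Hm) => //; rewrite Ho.
have Hpos : (0 < vsum (y :: q) (c v))%R.
  rewrite ffunE (big_rem z Hz) /= Hv ffunE eqxx.
  apply: (@lt_le_trans _ _ 1%R) => //; rewrite lerDl.
  by apply: sumr_ge0 => w _; apply: unitc_ge0.
exists (c v); split.
  move=> j Hj; rewrite ffunE ffunE big1_seq ?addr0 // => w /andP [_ Hw].
  have [u' Hu'] := all_some Hcyc Hw; subst w.
  rewrite ffunE; move: (Hm _ Hw); rewrite Hv /= => Hle.
  case: eqP => // Heq; move: Hj; rewrite -Heq ltnNge Hle //.
have Hoc : odd (c v) by rewrite Hv in Ho.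
rewrite ffunE Hoc; split; last by rewrite ltrDl.
move=> H; move: Hpos.
have -> : vsum (y :: q) (c v) = 0%R.
  by apply: (addrI (u (c v))); rewrite H addr0.
by rewrite ltxx.
Qed.

Definition fplay x l := path G x l && [forall y, ~~ G (last x l) y].

Lemma cut_step x l s1 y s2 s3 : path G x l ->
  x :: l = s1 ++ (y :: s2) ++ (y :: s3) ->
  (exists l', [/\ x :: l' = s1 ++ (y :: s3), path G x l', last x l' = last x l
     & (size l' < size l)%N]) /\
  (exists pre, path G x pre /\ last x pre = y) /\ path G y (rcons s2 y).
Proof.
case: s1 => [|a p] /= Hp [Ha Hl]; subst.
  move: Hp; rewrite cat_path /= => /andP [H1 /andP [H2 H3]].
  split; first exists s3; [split => //; by rewrite ?last_cat ?size_cat //= addnS ltnS leq_addl|].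
  split; first by exists [::].
  by rewrite rcons_path H1 H2.
move: Hp; rewrite cat_path /= cat_path /= => /andP [H1 /andP [H2 /andP [H3 /andP [H4 H5]]]].
split; first exists (p ++ y :: s3).
  split => //.
  - by rewrite cat_path /= H1 H2 H5.
  - by rewrite !last_cat /= last_cat.
  - by rewrite !size_cat /= size_cat /= ltn_add2l ltnS addnS ltnS leq_addl.
split; first by exists (rcons p y); rewrite rcons_path H1 H2 last_rcons.
by rewrite rcons_path H3 H4.
Qed.

Lemma shorten x l : NoWin x -> fplay x l -> exists l',
  [/\ fplay x l', uniq (x :: l') & ple (ppath c (x :: l)) (ppath c (x :: l'))].
Proof.
move=> Hnw; have [n Hn] : exists n, (size l <= n)%N by exists (size l).
elim: n l Hn => [|n IH] l Hn Hf.
  case Hu: (uniq (x :: l)); first by exists l; split => //; left.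
  have [s1 [y [s2 [s3 Hs]]]] := nonuniq_split (negbT Hu).
  have [[l' [_ _ _ Hsz]] _] := cut_step (proj1 (andP Hf)) Hs.
  by move: (leq_trans Hsz Hn).
case Hu: (uniq (x :: l)); first by exists l; split => //; left.
have [s1 [y [s2 [s3 Hs]]]] := nonuniq_split (negbT Hu).
case/andP: Hf => Hp Hd.
have [[l' [Hs' Hp' Hlast Hsz]] [[pre [Hpre Hlpre]] Hcyc]] := cut_step Hp Hs.
have Hf' : fplay x l' by rewrite /fplay Hp' Hlast Hd.
have [l'' [Hf'' Hu'' Hle]] := IH l' (leq_trans Hsz Hn) Hf'.
exists l''; split => //.
apply: ple_trans Hle; right.
have -> : ppath c (x :: l) =
  PFin [ffun i => (vsum (x :: l') i + vsum (y :: s2) i)%R].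
  rewrite /ppath Hs; congr PFin; apply/ffunP => i.
  by rewrite [RHS]ffunE Hs' -vsum_cut.
exact: cycle_lt Hnw Hpre Hlpre Hcyc.
Qed.

Fixpoint seqs_le (n : nat) : seq (seq (option V)) :=
  if n is n'.+1 then [::] :: [seq a :: s | a <- enum (@predT (option V)), s <- seqs_le n']
  else [:: [::]].

Lemma seqs_leP n s : (size s <= n)%N -> s \in seqs_le n.
Proof.
elim: n s => [|n IH] [|a s] //=.
rewrite ltnS => Hs; rewrite inE; apply/orP; right.
by apply: allpairs_f; rewrite ?mem_enum ?IH.
Qed.

Lemma In_map (A B : Type) (f : A -> B) (L : seq A) b :
  List.In b (map f L) -> exists2 a, List.In a L & b = f a.
Proof.
elim: L => //= a L IH [<-|/IH [a' Ha' ->]]; first by exists a; [left|].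
by exists a'; [right|].
Qed.

Lemma In_map2 (A B : Type) (f : A -> B) (L : seq A) a :
  List.In a L -> List.In (f a) (map f L).
Proof. by elim: L => //= a' L IH [->|/IH]; [left|right]. Qed.

Lemma In_mem (A : eqType) (L : seq A) a : a \in L -> List.In a L.
Proof. by elim: L => //= a' L IH; rewrite inE => /orP [/eqP ->|/IH]; [left|right]. Qed.

Lemma mem_In (A : eqType) (L : seq A) a : List.In a L -> a \in L.
Proof. by elim: L => //= a' L IH [->|/IH]; rewrite inE ?eqxx // => ->; rewrite orbT. Qed.

Lemma inf_path x : (forall l, path G x l -> exists y, G (last x l) y) ->
  exists p : nat -> option V, p 0 = x /\ forall n, G (p n) (p n.+1).
Proof.
move=> Hx.
pose step z := odflt z [pick y | G z y].
have Hstep : forall z, (exists y, G z y) -> G z (step z).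
  move=> z [y Hy]; rewrite /step; case: pickP => [y0 Hy0|Hn] //=.
  by rewrite Hn in Hy.
pose p n := iter n step x.
have Hr : forall n, exists l, path G x l /\ last x l = p n.
  elim=> [|n [l [Hl Hlast]]]; first by exists [::].
  exists (rcons l (p n.+1)); rewrite rcons_path last_rcons Hl Hlast /=.
  split => //; apply: Hstep; rewrite -Hlast; exact: Hx.
exists p; split => // n.
have [l [Hl Hlast]] := Hr n.
by apply: Hstep; rewrite -Hlast; exact: Hx.
Qed.

Lemma max_exists x : exists m, is_max (play_profile c G x) m.
Proof.
case: (classic (NoWin x)) => Hnw; last first.
  apply: NNPP => Hn; apply: Hnw => -[p [H0 [He Hw]]]; apply: Hn.
  exists (PInf d); split.
    by left; exists p; rewrite asbT.
  by case=> [|a|] _; [right|right|left].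
case: (classic (exists l, fplay x l)) => [[l0 Hl0]|Hnf].
  pose N := size (enum (@predT (option V))).
  pose L := [seq ppath c (x :: s) | s <- [seq s <- seqs_le N | fplay x s]].
  have HL : forall l, fplay x l -> exists2 m, List.In m L & ple (ppath c (x :: l)) m.
    move=> l Hl; have [l' [Hf' Hu' Hle]] := shorten Hnw Hl.
    exists (ppath c (x :: l')) => //.
    apply: In_map2; apply: In_mem; rewrite mem_filter Hf' /=.
    apply: seqs_leP; rewrite /N.
    have := uniq_leq_size Hu' (fun z _ => mem_enum (@predT (option V)) z).
    by rewrite /= => /ltnW.
  have [m0 Hm0 _] := HL l0 Hl0.
  have HLne : L <> [::] by move=> H; rewrite H in Hm0.
  have [m Hm Hmax] := list_max HLne.
  have [s Hs Em] := In_map Hm; subst m.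
  move: Hs => /mem_In; rewrite mem_filter => /andP [Hfs _].
  exists (ppath c (x :: s)); split.
    by right; exists s; case/andP: Hfs => H1 /forallP H2; split.
  move=> q [[p [H0 [He ->]]]|[l [Hp [Hd ->]]]].
    rewrite asbF; first by right.
    by move=> Hw; apply: Hnw; exists p.
  have Hfl : fplay x l by rewrite /fplay Hp; apply/forallP.
  have [m' Hm' Hle] := HL l Hfl.
  exact: ple_trans Hle (Hmax _ Hm').
have Hx : forall l, path G x l -> exists y, G (last x l) y.
  move=> l Hl; apply: NNPP => Hn; apply: Hnf; exists l.
  rewrite /fplay Hl; apply/forallP => y; apply/negP => Hy; apply: Hn; by exists y.
have [p [H0 He]] := inf_path Hx.
exists (PNegInf d); split.
  left; exists p; split => //; split => //.
  by rewrite asbF // => Hw; apply: Hnw; exists p.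
move=> q [[p' [H0' [He' ->]]]|[l [Hp [Hd ->]]]].
  by rewrite asbF; [left| move=> Hw; apply: Hnw; exists p'].
exfalso; apply: Hnf; exists l; rewrite /fplay Hp; exact/forallP.
Qed.
End Gen.

Section Main.
Variables (V : finType) (d : nat) (E : rel V) (o : V -> bool) (c : V -> 'I_d).
Hypothesis Hsucc : forall v : V, exists w, E v w.

Lemma maxval_spec sigma tau s :
  is_max (play_profile c (graph_st sigma tau) (Some s)) (maxval c sigma tau s).
Proof.
rewrite /maxval; apply: epsilon_spec.
exact: (@max_exists V d c (graph_st sigma tau) (fun _ => erefl)).
Qed.

Lemma valuation_spec sigma s :
  is_min (fun q => exists tau, strategy1 E o tau /\ q = maxval c sigma tau s)
    (valuation E o c sigma (Some s)).
Proof.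
rewrite /=; apply: epsilon_spec.
pose L := [seq maxval c sigma (fun a b => f (a, b)) s |
   f : {ffun V * V -> bool} <- [seq f : {ffun V * V -> bool} <- enum (@predT {ffun V * V -> bool}) | asb (strategy1 E o (fun a b => f (a, b)))]].
have Hall : forall tau, strategy1 E o tau -> List.In (maxval c sigma tau s) L.
  move=> tau Ht; pose f := [ffun p : V * V => tau p.1 p.2].
  have Ef : (fun a b => f (a, b)) = tau.
    by apply: functional_extensionality => a; apply: functional_extensionality => b; rewrite ffunE.
  rewrite -Ef; apply: In_map2; apply: In_mem; rewrite mem_filter mem_enum andbT.
  by rewrite Ef asbT.
have HE1 : strategy1 E o (E1 E o).
  split => // v Hv; have [w Hw] := Hsucc v; exists w; by rewrite /E1 Hv Hw.
have HLne : L <> [::] by move=> H; have := Hall _ HE1; rewrite H.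
have [m Hm Hmin] := list_min HLne.
exists m; split.
  have [f Hf ->] := In_map Hm; exists (fun a b => f (a, b)); split => //.
  by move: Hf => /mem_In; rewrite mem_filter => /andP [Ha _]; move: Ha; rewrite /asb; case: excluded_middle_informative.
by move=> q [tau [Ht ->]]; apply: Hmin; apply: Hall.
Qed.

Lemma maxval_mono sigma' (I : V -> option V -> bool) tau s :
  strategy0 E o sigma' -> strategy1 E o tau ->
  (forall a b, sigma' a b -> I a b) ->
  ple (maxval c sigma' tau s) (maxval c I tau s).
Proof.
move=> Hs' Ht Hsub.
have [Hp' _] := maxval_spec sigma' tau s.
have [_ Hmax] := maxval_spec I tau s.
apply: Hmax.
have Hrel : subrel (graph_st sigma' tau) (graph_st I tau).
  move=> [u|] b //= /orP [/Hsub ->|->] //; by rewrite orbT.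
case: Hp' => [[p [H0 [He Hq]]]|[l [Hp [Hd Hq]]]].
  by left; exists p; split => //; split => // n; apply: Hrel.
right; exists l; split; first exact: sub_path Hp.
split => //.
case Hl: (last (Some s) l) => [u|] y //.
exfalso.
case Ho: (o u).
  have [w Hw] := proj2 Ht u Ho; move: (Hd (Some w)); rewrite Hl /= Hw orbT //.
have [w Hw] := proj2 Hs' u (negbT Ho); move: (Hd w); rewrite Hl /= Hw //.
Qed.
End Main.

Theorem mainTheorem2 (V : finType) (d : nat) (E : rel V) (o : V -> bool)
  (c : V -> 'I_d)
  (Hsucc : forall v : V, exists w, E v w)
  (sigma : V -> option V -> bool)
  (Hsigma : strategy0 E o sigma)
  (Hreas : reasonable E o c sigma)
  (sigma' : V -> option V -> bool)
  (Hsigma' : strategy0 E o sigma')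
  (Hdirect : forall s t, sigma' s t -> improvements E o c sigma s t) :
  strat_le E o c sigma' (improvements E o c sigma).
Proof.
move=> s.
have [[tau2 [Ht2 Eq2]] _] := @valuation_spec V d E o c Hsucc (improvements E o c sigma) s.
have [_ Hmin1] := @valuation_spec V d E o c Hsucc sigma' s.
rewrite Eq2; apply: ple_trans (Hmin1 _ (ex_intro _ tau2 (conj Ht2 erefl))) _.
exact: (@maxval_mono V d E o c sigma' _ tau2 s Hsigma' Ht2 Hdirect).
Qed.
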